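(* Let $\mathfrak g$ be of type $G_2$ and $\lambda,\mu\in P^+$ with $\min\{m_2,n_2\}=0$. Then in $\mathcal F_{\lambda,\mu}$: $$(x^-_{(3,1)}\otimes t)^{(s)}(x^-_{(1,0)}\otimes1)^{(r)}v=0\quad\text{for all }r,s\in\mathbb Z_+\text{ with }r+s>m_1+n_1,$$ $$(x^-_{(1,0)}\otimes1)^{(r)}(x^-_{(1,1)}\otimes t)^{(s)}v=0\quad\text{for all }r,s\in\mathbb Z_+\text{ with }r-s>m_1+n_1.$$
   Context: $\mathfrak g$ is the simple Lie algebra of type $G_2$ with Cartan subalgebra $\mathfrak h$, simple roots $\alpha_1$ (short), $\alpha_2$ (long), coroots $h_1,h_2$, positive roots written $(r_1,r_2)$ for $r_1\alpha_1+r_2\alpha_2$ (namely $(1,0),(0,1),(1,1),(2,1),(3,1),(3,2)$), coroots $h_\alpha$, Chevalley basis $\{x^\pm_\alpha,h_i\}$, $\mathfrak n^+=\mathrm{span}\{x^+_\alpha\}$, dominant weights $P^+$; $m_i=\lambda(h_i)$, $n_i=\mu(h_i)$; $x^{(s)}=x^s/s!$. $\mathcal F_{\lambda,\mu}$ is the cyclic $\mathbf U(\mathfrak g\otimes\mathbb C[t])$-module generated by $v\ne0$ with relations $(\mathfrak n^+\otimes\mathbb C[t])v=0$; $(h\otimes t^r)v=\delta_{r,0}(\lambda+\mu)(h)v$ ($h\in\mathfrak h$); and for each positive root $\alpha$: $(x^-_\alpha\otimes1)^{(\lambda+\mu)(h_\alpha)+1}v=0$, $(x^-_\alpha\otimes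 t)^{\min\{\lambda(h_\alpha),\mu(h_\alpha)\}+1}v=0$, $(x^-_\alpha\otimes t^r)v=0$ for $r\ge2$. *)

(* Defs.v *)
From HB Require Import structures.
From mathcomp Require Import all_boot all_order all_algebra.
Set Implicit Arguments. Unset Strict Implicit. Unset Printing Implicit Defensive.
Import Order.TTheory GRing.Theory Num.Theory.
Local Open Scope ring_scope.

(** Positive roots r1*alpha1 + r2*alpha2 (alpha1 short, alpha2 long):
  R10 = (1,0), R01 = (0,1), R11 = (1,1), R21 = (2,1), R31 = (3,1), R32 = (3,2). *)
Inductive g2root := R10 | R01 | R11 | R21 | R31 | R32.

Inductive g2b := Xp of g2root | Xm of g2root | H1 | H2.

(** Structure constants of g in this Chevalley basis:
   [a, b] = \sum_(p <- g2br a b) p.1 * p.2.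
   (Computed from the 7-dimensional representation; [x^+_a, x^-_a] = h_a is the
   coroot, [h_i, x^{+-}_a] = +- a(h_i) x^{+-}_a, integral structure constants.) *)
Definition g2br (a b : g2b) : seq (int * g2b) :=
  match a, b with
  | (Xp R10), (Xp R01) => [:: ((1)%Z, (Xp R11))]
  | (Xp R10), (Xp R11) => [:: ((2)%Z, (Xp R21))]
  | (Xp R10), (Xp R21) => [:: ((3)%Z, (Xp R31))]
  | (Xp R10), (Xm R10) => [:: ((1)%Z, H1)]
  | (Xp R10), (Xm R11) => [:: ((-3)%Z, (Xm R01))]
  | (Xp R10), (Xm R21) => [:: ((-2)%Z, (Xm R11))]
  | (Xp R10), (Xm R31) => [:: ((-1)%Z, (Xm R21))]
  | (Xp R10), H1 => [:: ((-2)%Z, (Xp R10))]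
  | (Xp R10), H2 => [:: ((1)%Z, (Xp R10))]
  | (Xp R01), (Xp R10) => [:: ((-1)%Z, (Xp R11))]
  | (Xp R01), (Xp R31) => [:: ((1)%Z, (Xp R32))]
  | (Xp R01), (Xm R01) => [:: ((1)%Z, H2)]
  | (Xp R01), (Xm R11) => [:: ((1)%Z, (Xm R10))]
  | (Xp R01), (Xm R32) => [:: ((-1)%Z, (Xm R31))]
  | (Xp R01), H1 => [:: ((3)%Z, (Xp R01))]
  | (Xp R01), H2 => [:: ((-2)%Z, (Xp R01))]
  | (Xp R11), (Xp R10) => [:: ((-2)%Z, (Xp R21))]
  | (Xp R11), (Xp R21) => [:: ((-3)%Z, (Xp R32))]
  | (Xp R11), (Xm R10) => [:: ((-3)%Z, (Xp R01))]
  | (Xp R11), (Xm R01) => [:: ((1)%Z, (Xp R10))]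
  | (Xp R11), (Xm R11) => [:: ((1)%Z, H1); ((3)%Z, H2)]
  | (Xp R11), (Xm R21) => [:: ((2)%Z, (Xm R10))]
  | (Xp R11), (Xm R32) => [:: ((1)%Z, (Xm R21))]
  | (Xp R11), H1 => [:: ((1)%Z, (Xp R11))]
  | (Xp R11), H2 => [:: ((-1)%Z, (Xp R11))]
  | (Xp R21), (Xp R10) => [:: ((-3)%Z, (Xp R31))]
  | (Xp R21), (Xp R11) => [:: ((3)%Z, (Xp R32))]
  | (Xp R21), (Xm R10) => [:: ((-2)%Z, (Xp R11))]
  | (Xp R21), (Xm R11) => [:: ((2)%Z, (Xp R10))]
  | (Xp R21), (Xm R21) => [:: ((2)%Z, H1); ((3)%Z, H2)]
  | (Xp R21), (Xm R31) => [:: ((1)%Z, (Xm R10))]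
  | (Xp R21), (Xm R32) => [:: ((-1)%Z, (Xm R11))]
  | (Xp R21), H1 => [:: ((-1)%Z, (Xp R21))]
  | (Xp R31), (Xp R01) => [:: ((-1)%Z, (Xp R32))]
  | (Xp R31), (Xm R10) => [:: ((-1)%Z, (Xp R21))]
  | (Xp R31), (Xm R21) => [:: ((1)%Z, (Xp R10))]
  | (Xp R31), (Xm R31) => [:: ((1)%Z, H1); ((1)%Z, H2)]
  | (Xp R31), (Xm R32) => [:: ((1)%Z, (Xm R01))]
  | (Xp R31), H1 => [:: ((-3)%Z, (Xp R31))]
  | (Xp R31), H2 => [:: ((1)%Z, (Xp R31))]
  | (Xp R32), (Xm R01) => [:: ((-1)%Z, (Xp R31))]
  | (Xp R32), (Xm R11) => [:: ((1)%Z, (Xp R21))]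
  | (Xp R32), (Xm R21) => [:: ((-1)%Z, (Xp R11))]
  | (Xp R32), (Xm R31) => [:: ((1)%Z, (Xp R01))]
  | (Xp R32), (Xm R32) => [:: ((1)%Z, H1); ((2)%Z, H2)]
  | (Xp R32), H2 => [:: ((-1)%Z, (Xp R32))]
  | (Xm R10), (Xp R10) => [:: ((-1)%Z, H1)]
  | (Xm R10), (Xp R11) => [:: ((3)%Z, (Xp R01))]
  | (Xm R10), (Xp R21) => [:: ((2)%Z, (Xp R11))]
  | (Xm R10), (Xp R31) => [:: ((1)%Z, (Xp R21))]
  | (Xm R10), (Xm R01) => [:: ((-1)%Z, (Xm R11))]
  | (Xm R10), (Xm R11) => [:: ((-2)%Z, (Xm R21))]
  | (Xm R10), (Xm R21) => [:: ((-3)%Z, (Xm R31))]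
  | (Xm R10), H1 => [:: ((2)%Z, (Xm R10))]
  | (Xm R10), H2 => [:: ((-1)%Z, (Xm R10))]
  | (Xm R01), (Xp R01) => [:: ((-1)%Z, H2)]
  | (Xm R01), (Xp R11) => [:: ((-1)%Z, (Xp R10))]
  | (Xm R01), (Xp R32) => [:: ((1)%Z, (Xp R31))]
  | (Xm R01), (Xm R10) => [:: ((1)%Z, (Xm R11))]
  | (Xm R01), (Xm R31) => [:: ((-1)%Z, (Xm R32))]
  | (Xm R01), H1 => [:: ((-3)%Z, (Xm R01))]
  | (Xm R01), H2 => [:: ((2)%Z, (Xm R01))]
  | (Xm R11), (Xp R10) => [:: ((3)%Z, (Xm R01))]
  | (Xm R11), (Xp R01) => [:: ((-1)%Z, (Xm R10))]
  | (Xm R11), (Xp R11) => [:: ((-1)%Z, H1); ((-3)%Z, H2)]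
  | (Xm R11), (Xp R21) => [:: ((-2)%Z, (Xp R10))]
  | (Xm R11), (Xp R32) => [:: ((-1)%Z, (Xp R21))]
  | (Xm R11), (Xm R10) => [:: ((2)%Z, (Xm R21))]
  | (Xm R11), (Xm R21) => [:: ((3)%Z, (Xm R32))]
  | (Xm R11), H1 => [:: ((-1)%Z, (Xm R11))]
  | (Xm R11), H2 => [:: ((1)%Z, (Xm R11))]
  | (Xm R21), (Xp R10) => [:: ((2)%Z, (Xm R11))]
  | (Xm R21), (Xp R11) => [:: ((-2)%Z, (Xm R10))]
  | (Xm R21), (Xp R21) => [:: ((-2)%Z, H1); ((-3)%Z, H2)]
  | (Xm R21), (Xp R31) => [:: ((-1)%Z, (Xp R10))]
  | (Xm R21), (Xp R32) => [:: ((1)%Z, (Xp R11))]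
  | (Xm R21), (Xm R10) => [:: ((3)%Z, (Xm R31))]
  | (Xm R21), (Xm R11) => [:: ((-3)%Z, (Xm R32))]
  | (Xm R21), H1 => [:: ((1)%Z, (Xm R21))]
  | (Xm R31), (Xp R10) => [:: ((1)%Z, (Xm R21))]
  | (Xm R31), (Xp R21) => [:: ((-1)%Z, (Xm R10))]
  | (Xm R31), (Xp R31) => [:: ((-1)%Z, H1); ((-1)%Z, H2)]
  | (Xm R31), (Xp R32) => [:: ((-1)%Z, (Xp R01))]
  | (Xm R31), (Xm R01) => [:: ((1)%Z, (Xm R32))]
  | (Xm R31), H1 => [:: ((3)%Z, (Xm R31))]
  | (Xm R31), H2 => [:: ((-1)%Z, (Xm R31))]
  | (Xm R32), (Xp R01) => [:: ((1)%Z, (Xm R31))]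
  | (Xm R32), (Xp R11) => [:: ((-1)%Z, (Xm R21))]
  | (Xm R32), (Xp R21) => [:: ((1)%Z, (Xm R11))]
  | (Xm R32), (Xp R31) => [:: ((-1)%Z, (Xm R01))]
  | (Xm R32), (Xp R32) => [:: ((-1)%Z, H1); ((-2)%Z, H2)]
  | (Xm R32), H2 => [:: ((1)%Z, (Xm R32))]
  | H1, (Xp R10) => [:: ((2)%Z, (Xp R10))]
  | H1, (Xp R01) => [:: ((-3)%Z, (Xp R01))]
  | H1, (Xp R11) => [:: ((-1)%Z, (Xp R11))]
  | H1, (Xp R21) => [:: ((1)%Z, (Xp R21))]
  | H1, (Xp R31) => [:: ((3)%Z, (Xp R31))]
  | H1, (Xm R10) => [:: ((-2)%Z, (Xm R10))]
  | H1, (Xm R01) => [:: ((3)%Z, (Xm R01))]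
  | H1, (Xm R11) => [:: ((1)%Z, (Xm R11))]
  | H1, (Xm R21) => [:: ((-1)%Z, (Xm R21))]
  | H1, (Xm R31) => [:: ((-3)%Z, (Xm R31))]
  | H2, (Xp R10) => [:: ((-1)%Z, (Xp R10))]
  | H2, (Xp R01) => [:: ((2)%Z, (Xp R01))]
  | H2, (Xp R11) => [:: ((1)%Z, (Xp R11))]
  | H2, (Xp R31) => [:: ((-1)%Z, (Xp R31))]
  | H2, (Xp R32) => [:: ((1)%Z, (Xp R32))]
  | H2, (Xm R10) => [:: ((1)%Z, (Xm R10))]
  | H2, (Xm R01) => [:: ((-2)%Z, (Xm R01))]
  | H2, (Xm R11) => [:: ((-1)%Z, (Xm R11))]
  | H2, (Xm R31) => [:: ((1)%Z, (Xm R31))]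
  | H2, (Xm R32) => [:: ((-1)%Z, (Xm R32))]
  | _, _ => [::]
  end.

(** Coroots: h_a = (hco a).1 * h_1 + (hco a).2 * h_2. *)
Definition hco (a : g2root) : nat * nat :=
  match a with
  | R10 => (1, 0) | R01 => (0, 1) | R11 => (1, 3)
  | R21 => (2, 3) | R31 => (1, 1) | R32 => (1, 2)
  end%N.

(** lambda(h_a) for the weight lambda with lambda(h_1) = m1, lambda(h_2) = m2. *)
Definition wt (m1 m2 : nat) (a : g2root) : nat :=
  ((hco a).1 * m1 + (hco a).2 * m2)%N.

(** A representation of the current algebra g ⊗ C[t] on V: [act b r] is the
  action of the basis element b ⊗ t^r (these span g ⊗ C[t]); the bracket
  [x ⊗ t^r, y ⊗ t^s] = [x, y] ⊗ t^(r+s) is respected. Equivalently, V is a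
  U(g ⊗ C[t])-module. *)
Record current_rep (C : numClosedFieldType) (V : lmodType C) := CurrentRep {
  act : g2b -> nat -> {linear V -> V};
  act_bracket : forall (a b : g2b) (r s : nat) (w : V),
    act a r (act b s w) - act b s (act a r w)
    = \sum_(p <- g2br a b) (p.1)%:~R *: act p.2 (r + s)%N w
}.

Definition dpow (C : numClosedFieldType) (V : lmodType C) (rho : current_rep V)
    (b : g2b) (r k : nat) (w : V) : V :=
  (k`!%:R)^-1 *: iter k (act rho b r) w.

(** The defining relations of F_{lambda,mu} on the vector v, where
  lambda(h_i) = m_i, mu(h_i) = n_i. *)
Definition F_relations (C : numClosedFieldType) (V : lmodType C)
    (rho : current_rep V) (m1 m2 n1 n2 : nat) (v : V) : Prop :=
  (forall (a : g2root) (r : nat), act rho (Xp a) r v = 0) /\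
      (forall r : nat, act rho H1 r v = (if r == 0%N then (m1 + n1)%:R *: v else 0)) /\
      (forall r : nat, act rho H2 r v = (if r == 0%N then (m2 + n2)%:R *: v else 0)) /\
      (forall a : g2root, dpow rho (Xm a) 0 (wt (m1 + n1) (m2 + n2) a).+1 v = 0) /\
      (forall a : g2root, dpow rho (Xm a) 1 (minn (wt m1 m2 a) (wt n1 n2 a)).+1 v = 0) /\
    (forall (a : g2root) (r : nat), (2 <= r)%N -> act rho (Xm a) r v = 0).

(* Main.v *)
Require Import Defs.
From HB Require Import structures.
From mathcomp Require Import all_boot all_order all_algebra.
From mathcomp Require Import zify ring.
Import Order.TTheory GRing.Theory Num.Theory.
Local Open Scope ring_scope.
Set Implicit Arguments. Unset Strict Implicit. Unset Printing Implicit Defensive.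

Definition Good {C : numClosedFieldType} {V : lmodType C} (rho : current_rep V) (w : V) :=
  forall b r, (2 <= r)%N -> act rho b r w = 0.

Lemma good_act {C : numClosedFieldType} {V : lmodType C} (rho : current_rep V) w b r :
  Good rho w -> Good rho (act rho b r w).
Proof.
move=> Hw b0 r0 H2.
have := act_bracket rho b0 b r0 r w.
rewrite (Hw b0 r0 H2) linear0 subr0 => ->.
apply: big1 => p _; rewrite Hw ?scaler0 //; lia.
Qed.

Lemma good_iter {C : numClosedFieldType} {V : lmodType C} (rho : current_rep V) w b r n :
  Good rho w -> Good rho (iter n (act rho b r) w).
Proof. by move=> Hw; elim: n => //= n IH; apply: good_act. Qed.

Lemma good_scale {C : numClosedFieldType} {V : lmodType C} (rho : current_rep V) w (k : C) :
  Good rho w -> Good rho (k *: w).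
Proof. by move=> Hw b r H; rewrite linearZZ Hw ?scaler0. Qed.

Lemma comm_nil {C : numClosedFieldType} {V : lmodType C} (rho : current_rep V) A B r s w :
  g2br A B = [::] -> act rho A r (act rho B s w) = act rho B s (act rho A r w).
Proof.
move=> H; have := act_bracket rho A B r s w; rewrite H big_nil.
by move/eqP; rewrite subr_eq0 => /eqP.
Qed.

Lemma comm_good {C : numClosedFieldType} {V : lmodType C} (rho : current_rep V) A B r s w c b' :
  g2br A B = [:: (c, b')] -> (2 <= r + s)%N -> Good rho w ->
  act rho A r (act rho B s w) = act rho B s (act rho A r w).
Proof.
move=> H H2 Hw; have := act_bracket rho A B r s w; rewrite H big_cons big_nil /= (Hw b' (r+s)) //.
by rewrite scaler0 addr0; move/eqP; rewrite subr_eq0 => /eqP.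
Qed.

Lemma iter_lin0 {C : numClosedFieldType} {V : lmodType C} (f : {linear V -> V}) n :
  iter n f 0 = 0.
Proof. by elim: n => //= n ->; rewrite linear0. Qed.
Lemma iter_linD {C : numClosedFieldType} {V : lmodType C} (f : {linear V -> V}) n x y :
  iter n f (x + y) = iter n f x + iter n f y.
Proof. by elim: n => //= n ->; rewrite linearD. Qed.
Lemma iter_linB {C : numClosedFieldType} {V : lmodType C} (f : {linear V -> V}) n x y :
  iter n f (x - y) = iter n f x - iter n f y.
Proof. by elim: n => //= n ->; rewrite linearB. Qed.
Lemma iter_linN {C : numClosedFieldType} {V : lmodType C} (f : {linear V -> V}) n x :
  iter n f (- x) = - iter n f x.
Proof. by elim: n => //= n ->; rewrite linearN. Qed.
Lemma iter_linZ {C : numClosedFieldType} {V : lmodType C} (f : {linear V -> V}) n (k : C) x :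
  iter n f (k *: x) = k *: iter n f x.
Proof. by elim: n => //= n ->; rewrite linearZZ. Qed.

Lemma iter_comm {T : Type} (P : T -> Prop) (f g : T -> T) n w :
  (forall w, P w -> f (g w) = g (f w)) -> (forall w, P w -> P (g w)) -> P w ->
  iter n g (f w) = f (iter n g w).
Proof.
move=> Hc Hp Hw; elim: n => //= n ->.
suff: P (iter n g w) by move/Hc.
by elim: n => //= n IH; apply: Hp.
Qed.

Lemma iter_comm1 {C : numClosedFieldType} {V : lmodType C} (P : V -> Prop)
   (f g h : {linear V -> V}) (k : C) n w :
  (forall w, P w -> f (g w) = g (f w) + k *: h w) ->
  (forall w, P w -> h (g w) = g (h w)) ->
  (forall w, P w -> P (g w)) -> P w ->
  f (iter n g w) = iter n g (f w) + (n%:R * k) *: iter n.-1 g (h w).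
Proof.
move=> Hf Hh Hp Hw.
have Pi : forall m, P (iter m g w) by elim=> //= m IH; apply: Hp.
elim: n => [|n IH] /=; first by rewrite mul0r scale0r addr0.
rewrite Hf // IH linearD linearZZ.
have -> : h (iter n g w) = iter n g (h w) by rewrite (@iter_comm _ P h g n w).
have -> : (n%:R * k) *: g (iter n.-1 g (h w)) = (n%:R * k) *: iter n g (h w).
  by case: n {IH} => [|n] //=; rewrite mul0r !scale0r.
by rewrite -addrA -scalerDl mulrSr mulrDl mul1r.
Qed.


Section S.
Context {C : numClosedFieldType} {V : lmodType C} (rho : current_rep V).
Definition oF := act rho (Xm R10) 0.
Definition oY := act rho (Xm R01) 1.
Definition oZ1 := act rho (Xm R11) 1.
Definition oX := act rho (Xm R21) 1.
Definition oZ := act rho (Xm R31) 1.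

Lemma brFY w : oF (oY w) = oY (oF w) + (-1) *: oZ1 w.
Proof.
have := act_bracket rho (Xm R10) (Xm R01) 0 1 w; rewrite /= big_cons big_nil addr0 add0n.
by move/eqP; rewrite subr_eq => /eqP ->; rewrite addrC.
Qed.
Lemma brFZ1 w : oF (oZ1 w) = oZ1 (oF w) + (-2) *: oX w.
Proof.
have := act_bracket rho (Xm R10) (Xm R11) 0 1 w; rewrite /= big_cons big_nil addr0 add0n.
by move/eqP; rewrite subr_eq => /eqP ->; rewrite addrC.
Qed.
Lemma brFX w : oF (oX w) = oX (oF w) + (-3) *: oZ w.
Proof.
have := act_bracket rho (Xm R10) (Xm R21) 0 1 w; rewrite /= big_cons big_nil addr0 add0n.
by move/eqP; rewrite subr_eq => /eqP ->; rewrite addrC.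
Qed.
Lemma brFZ w : oF (oZ w) = oZ (oF w).
Proof. exact: comm_nil. Qed.
Lemma brYZ1 w : oY (oZ1 w) = oZ1 (oY w).
Proof. exact: comm_nil. Qed.
Lemma brYX w : oY (oX w) = oX (oY w).
Proof. exact: comm_nil. Qed.
Lemma brYZ w : Good rho w -> oY (oZ w) = oZ (oY w).
Proof. exact: comm_good. Qed.
Lemma brZ1X w : Good rho w -> oZ1 (oX w) = oX (oZ1 w).
Proof. exact: comm_good. Qed.
Lemma brZ1Z w : oZ1 (oZ w) = oZ (oZ1 w).
Proof. exact: comm_nil. Qed.
Lemma brXZ w : oX (oZ w) = oZ (oX w).
Proof. exact: comm_nil. Qed.

Variable v : V.
Definition uu j := locked (dpow rho (Xm R10) 0 j v).

Lemma Fu j : oF (uu j) = (j.+1)%:R *: uu j.+1.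
Proof.
rewrite /uu -!lock /dpow /oF linearZZ scalerA factS natrM invfM mulrA mulfV ?mul1r //.
by rewrite pnatr_eq0.
Qed.

Lemma uu0 : uu 0 = v.
Proof. by rewrite /uu -lock /dpow /= invr1 scale1r. Qed.

Definition ub k := if (k < 3)%N then 0 else uu (k - 3).

Lemma ub3 k : ub k.+3 = uu k.
Proof. by rewrite /ub /= !subSS subn0. Qed.

Lemma Fub k : oF (ub k) = (k%:R - 2) *: ub k.+1.
Proof.
case: k => [|[|[|k]]]; rewrite /ub /= ?linear0 ?scaler0 //.
  by rewrite subrr scale0r.
rewrite !subSS !subn0 Fu; congr (_ *: _); rewrite !mulrS; ring.
Qed.

Definition G k := oY (ub k.+3) - oZ1 (ub k.+2) + oX (ub k.+1) - oZ (ub k).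

Lemma regroup (p1 q1 p2 q2 p3 q3 p4 : V) :
  (p1 + q1) - (p2 + q2) + (p3 + q3) - p4 = p1 + (q1 - p2) + (p3 - q2) + (q3 - p4).
Proof. by rewrite !opprD !addrA; congr (_ + _ + _); rewrite addrAC. Qed.

Lemma FG k : oF (G k) = (k.+1)%:R *: G k.+1.
Proof.
rewrite /G [in LHS]linearB [in LHS]linearD [in LHS]linearB brFY brFZ1 brFX brFZ (Fub k.+3) (Fub k.+2) (Fub k.+1) (Fub k).
move: (ub k.+4) (ub k.+3) (ub k.+2) (ub k.+1) => a4 a3 a2 a1.
rewrite (linearZZ oY) (linearZZ oZ1) (linearZZ oX) (linearZZ oZ) regroup.
rewrite !scalerDr !scalerN -!scalerBl -!scaleNr.
by congr (_ + _ + _ + _); congr (_ *: _); rewrite ?mulNrn !mulrS; ring.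
Qed.

Hypothesis Hv : Good rho v.
Hypothesis HY : oY v = 0.
Variable N : nat.
Hypothesis HN : uu N.+1 = 0.

Lemma goodU j : Good rho (uu j).
Proof. by rewrite /uu -lock; apply: good_scale; apply: good_iter. Qed.

Lemma G0 : G 0 = 0.
Proof. by rewrite /G ub3 uu0 HY /ub /= !linear0 ?oppr0 ?addr0 ?subr0. Qed.

Lemma Gall k : G k = 0.
Proof.
elim: k => [|k IH]; first exact: G0.
have := FG k; rewrite IH linear0 => /esym/eqP; rewrite scaler_eq0 pnatr_eq0 /=.
by move/eqP.
Qed.

Lemma rel j : oZ (uu j) = oY (uu j.+3) - oZ1 (uu j.+2) + oX (uu j.+1).
Proof.
have := Gall j.+3; rewrite /G !ub3 => /eqP; rewrite subr_eq0 => /eqP.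
by move=> ->.
Qed.

Lemma uu_big j : (N < j)%N -> uu j = 0.
Proof.
elim: j => [//|j IH] H.
have [Hj|Hj] := ltnP N j; last first.
  by have -> : j = N by lia.
have := Fu j; rewrite IH // linear0 => /esym/eqP; rewrite scaler_eq0 pnatr_eq0 /=.
by move/eqP.
Qed.

Lemma itZ_Y n w : Good rho w -> iter n oZ (oY w) = oY (iter n oZ w).
Proof. move=> Hw; apply: (@iter_comm _ (Good rho)) => // x Hx; [exact: brYZ | exact: good_act]. Qed.
Lemma itX_Y n w : Good rho w -> iter n oX (oY w) = oY (iter n oX w).
Proof. move=> Hw; apply: (@iter_comm _ (Good rho)) => // x Hx; [exact: brYX | exact: good_act]. Qed.
Lemma itZ1_Y n w : Good rho w -> iter n oZ1 (oY w) = oY (iter n oZ1 w).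
Proof. move=> Hw; apply: (@iter_comm _ (Good rho)) => // x Hx; [exact: brYZ1 | exact: good_act]. Qed.
Lemma itZ_Z1 n w : Good rho w -> iter n oZ (oZ1 w) = oZ1 (iter n oZ w).
Proof. move=> Hw; apply: (@iter_comm _ (Good rho)) => // x Hx; [exact: brZ1Z | exact: good_act]. Qed.
Lemma itX_Z1 n w : Good rho w -> iter n oX (oZ1 w) = oZ1 (iter n oX w).
Proof. move=> Hw; apply: (@iter_comm _ (Good rho)) => // x Hx; [exact: brZ1X | exact: good_act]. Qed.
Lemma itZ_X n w : Good rho w -> iter n oZ (oX w) = oX (iter n oZ w).
Proof. move=> Hw; apply: (@iter_comm _ (Good rho)) => // x Hx; [exact: brXZ | exact: good_act]. Qed.
Lemma itZ_F n w : Good rho w -> iter n oZ (oF w) = oF (iter n oZ w).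
Proof. move=> Hw; apply: (@iter_comm _ (Good rho)) => // x Hx; [exact: brFZ | exact: good_act]. Qed.

Lemma F_Z1 n w : Good rho w ->
  oF (iter n oZ1 w) = iter n oZ1 (oF w) + (n%:R * -2) *: iter n.-1 oZ1 (oX w).
Proof.
move=> Hw; apply: (@iter_comm1 _ _ (Good rho)) => // x Hx; 
  [exact: brFZ1 | by rewrite brZ1X | exact: good_act].
Qed.
Lemma F_X n w : Good rho w ->
  oF (iter n oX w) = iter n oX (oF w) + (n%:R * -3) *: iter n.-1 oX (oZ w).
Proof.
move=> Hw; apply: (@iter_comm1 _ _ (Good rho)) => // x Hx; 
  [exact: brFX | by rewrite brXZ | exact: good_act].
Qed.

Lemma gi n b r w : Good rho w -> Good rho (iter n (act rho b r) w).
Proof. exact: good_iter. Qed.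

Lemma L d : forall a b c j, (N + 2 * a + b < j + d)%N ->
  iter a oY (iter b oZ1 (iter c oX (iter d oZ (uu j)))) = 0.
Proof.
elim: d => [|d IH] a b c j H.
  by rewrite /= uu_big ?iter_lin0 //; lia.
rewrite iterSr rel !iter_linD !iter_linN.
rewrite (itZ_Y _ (goodU _)) (itX_Y _ (gi _ _ _ (goodU _))) (itZ1_Y _ (gi _ _ _ (gi _ _ _ (goodU _)))) -iterSr.
rewrite (itZ_Z1 _ (goodU _)) (itX_Z1 _ (gi _ _ _ (goodU _))) -iterSr.
rewrite (itZ_X _ (goodU _)) -iterSr.
rewrite IH; last lia.
rewrite IH; last lia.
rewrite IH; last lia.
by rewrite subr0 addr0.
Qed.

Lemma M r : forall b c d j, (N + b < j + d + r)%N ->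
  iter r oF (iter b oZ1 (iter c oX (iter d oZ (uu j)))) = 0.
Proof.
elim: r => [|r IH] b c d j H.
  by have := @L d 0 b c j; apply; lia.
rewrite iterSr (F_Z1 _ (gi _ _ _ (gi _ _ _ (goodU _)))) (F_X _ (gi _ _ _ (goodU _))).
rewrite -(itZ_F _ (goodU _)) Fu -iterS -iterS iter_linZ.
rewrite !iter_linD !iter_linZ.
rewrite IH; last lia.
rewrite IH; last lia.
case: b H => [|b] H; first by rewrite mul0r scale0r !scaler0 !addr0.
rewrite IH; last lia.
by rewrite !scaler0 !addr0.
Qed.

End S.

Unset Implicit Arguments.

Theorem lemma6p1 (C : numClosedFieldType) (m1 m2 n1 n2 : nat) :
  minn m2 n2 = 0%N ->
  forall (V : lmodType C) (rho : current_rep V) (v : V),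
    F_relations rho m1 m2 n1 n2 v ->
    (forall r s : nat, (m1 + n1 < r + s)%N ->
       dpow rho (Xm R31) 1 s (dpow rho (Xm R10) 0 r v) = 0) /\
    (forall r s : nat, (m1 + n1 < r - s)%N ->
       dpow rho (Xm R10) 0 r (dpow rho (Xm R11) 1 s v) = 0).
Proof.
move=> Hmin V rho v [HXp [HH1 [HH2 [HF0 [HF1 HF2]]]]].
have Hv : Good rho v.
  move=> b r Hr; case: b => [a|a||]; [exact: HXp | exact: HF2 | rewrite HH1 | rewrite HH2];
  by case: r Hr.
have HY : oY rho v = 0.
  have := HF1 R01; rewrite /wt /= !mul0n !mul1n !add0n Hmin /dpow /=.
  by rewrite invr1 scale1r.
have HN : uu rho v (m1 + n1).+1 = 0.
  by have := HF0 R10; rewrite /wt /= !mul1n !mul0n !addn0 /uu -lock.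
have Eu r : dpow rho (Xm R10) 0 r v = uu rho v r by rewrite /uu -lock.
split.
  move=> r s H; rewrite Eu /dpow.
  have HL : iter s (oZ rho) (uu rho v r) = 0.
    by have := @L _ _ rho v Hv HY _ HN s 0 0 0 r; apply; lia.
  by move: HL; rewrite /oZ => ->; rewrite scaler0.
move=> r s H; rewrite /dpow iter_linZ.
have -> : iter s (act rho (Xm R11) 1) v = iter s (oZ1 rho) (iter 0 (oX rho) (iter 0 (oZ rho) (uu rho v 0))).
  by rewrite /= -Eu /dpow /= invr1 scale1r.
have HM : iter r (oF rho) (iter s (oZ1 rho) (iter 0 (oX rho) (iter 0 (oZ rho) (uu rho v 0)))) = 0.
  by apply: (@M _ _ rho v Hv HY _ HN r s 0 0 0); lia.
by move: HM; rewrite /oF => ->; rewrite !scaler0.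
Qed.
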